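(* Consider an autonomous system $\dot{\bm z}=X(\bm z)$, $X:\mathbb{C}^n\to\mathbb{C}^n$, a non-trivial solution $\phi(t)$ of it, and $t_0$ such that $X_i(\phi(t_0))\neq 0$ for some index $i$. Write $A_0:=X(\phi(t_0))$, $X_i^0:=X_i(\phi(t_0))$, and for $j\ge 1$ let $A_j:=X^{(j)}(\phi(t_0))$ be the lexicographically ordered matrix of all order-$j$ partial derivatives of $X$ evaluated at $\phi(t_0)$ (an $n\times d_{n,j}$ matrix, $d_{n,j}=\binom{n+j-1}{n-1}$). Define the constant matrices $F_1:=\mathrm{Id}_n-\frac{1}{X_i^0}\left(A_0\odot \bm{e}_i^T\right)$ and, for $k\ge 2$, $F_{k}=-\frac{1}{X^0_i} \left[\sum_{j=0}^{k-2}\binom{k-1}{j}F_{j+1}\left(A_{k-j-1}\odot \mathrm{Id}_n^{\odot j}\right)\right] U_k$, where $U_k=\left[\sum_{j=0}^{k-1} \binom{k}{j+1} (-1)^{j} (\mathrm{Id}_n - F_1)^{\odot j} \odot \mathrm{Id}_n^{\odot k-1-j}\right]\odot \bm{e}_i^T = \left[\bigodot_{j=1}^{k-1}(\mathrm{Id}_n-\zeta_k^jF_1)\right]\odot \bm{e}_i^T$, with $\zeta_k=\exp(2\pi \mathrm{i}/k)$. Then for every $k\ge 1$, $F_k\left(A_0\odot \mathrm{Id}_n^{\odot k-1}\right) + \binom{k-1}{1} F_{k-1}\left(A_1\odot \mathrm{Id}_n^{\odot k-2}\right) + \dots + \binom{k-1}{k-2} F_{2}\left(A_{k-2}\odot \mathrm{Id}_n\right)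 + F_{1}A_{k-1} =0,$ i.e. the conjectured filter matrix $\Phi=\exp_\odot(\cdots\mid F_3\mid F_2\mid F_1)$ satisfies the admissibility (kernel) condition at $t=t_0$ for every order $k\ge1$.
   Context: Here $\odot$ denotes Bekbaev's symmetric product of matrices: a matrix in $\mathrm{Mat}^{i,j}_{n}$ is identified with a linear map $\mathrm{Sym}^j K^n\to\mathrm{Sym}^i K^n$ (a $d_{n,i}\times d_{n,j}$ matrix), and $A\odot B$ acts on symmetric monomials $\bm{e}_1^{\odot k_1}\cdots\bm{e}_n^{\odot k_n}$ by $\frac{1}{\binom{j_1+j_2}{j_1}}\sum_{\mathbf p}\binom{\mathbf k}{\mathbf p}A(\bm e^{\odot\mathbf p})\odot B(\bm e^{\odot(\mathbf k-\mathbf p)})$, behaving like multiplication of homogeneous polynomials; powers $^{\odot k}$ are built from it, and $\exp_\odot A=\sum_{i\ge0}\frac{1}{i!}A^{\odot i}$. $\bm e_i$ is the $i$-th canonical basis vector of $K^n$. The displayed identity is the condition that the lower block of the (conjectural) filter matrix, applied to the inverse fundamental matrix of the linearized higher variational system, yields admissible solutions of the dual (adjoint) variational system, i.e. jets of formal first integrals; the statement proves this condition only at the initial time $t_0$, the full conjecture remaining open. *)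

(* Defs.v *)
(* Bekbaev's symmetric matrices are represented as linear maps between      *)
(* spaces of homogeneous polynomials: a matrix of Mat^{r,c}_n (size         *)
(* d_{n,r} x d_{n,c}) is a function M : 'X_{1..n} -> {mpoly K[n]} sending   *)
(* the column monomial m (= e_1^{.k_1}...e_n^{.k_n}, mdeg m = c) to the     *)
(* column M m, a homogeneous polynomial of degree r whose coefficient at    *)
(* the row monomial r' is the entry (r', m).  Only the values on monomials  *)
(* of degree c are meaningful; all operations below only ever evaluate a   *)
(* matrix on monomials of its column degree.                               *)
From HB Require Import structures.
From mathcomp Require Import all_boot all_order all_algebra.
From mathcomp Require Import mpoly.

Set Implicit Arguments.
Unset Strict Implicit.
Unset Printing Implicit Defensive.

Import Order.TTheory GRing.Theory.
Local Open Scope ring_scope.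

Section SymMatrices.
Variables (K : fieldType) (n : nat).

Definition smat := 'X_{1..n} -> {mpoly K[n]}.

Definition mbin (k p : 'X_{1..n}) : nat := (\prod_(l < n) 'C(k l, p l))%N.

Definition smul (A B : smat) : smat :=
  fun m => \sum_(r <- msupp (B m)) (B m)@_r *: A r.

(* Bekbaev's symmetric product A (.) B, where jA is the column degree of A;
   on a monomial k of degree j = jA + jB:
   (A . B) e^k = 1/C(j,jA) sum_{p <= k, |p| = jA} binom(k,p) A(e^p) (.) B(e^(k-p)),
   the product (.) of symmetric vectors being the product of polynomials. *)
Definition sprod (jA : nat) (A B : smat) : smat :=
  fun k => ('C(mdeg k, jA))%:R^-1 *:
    \sum_(p : 'X_{1..n < (mdeg k).+1} | ((p <= k)%MM && (mdeg p == jA)))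
       (mbin k p)%:R *: (A p * B (k - p)%MM).

Definition sunit : smat := fun m => (m == 0%MM)%:R.

Fixpoint spow (jA : nat) (A : smat) (k : nat) : smat :=
  match k with
  | 0 => sunit
  | k'.+1 => sprod jA A (spow jA A k')
  end.

Definition sid : smat := fun m => 'X_[m].

Definition seT (i : 'I_n) : smat := fun m => (m == U_(i)%MM)%:R.

Definition sadd (A B : smat) : smat := fun m => A m + B m.
Definition ssub (A B : smat) : smat := fun m => A m - B m.
Definition sscale (c : K) (A : smat) : smat := fun m => c *: A m.
Definition szero : smat := fun _ => 0.

(* The data: A j = A_j in Mat^{1,j} (A 0 = A_0 = X(phi(t0)) in Mat^{1,0}),
   i the chosen index, X_i^0 = (A 0 0)@_(U_(i)). *)
Section Filter.
Variables (A : nat -> smat) (i : 'I_n).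

Definition Xi0 : K := (A 0%N 0%MM)@_(U_(i)%MM).

Definition F1 : smat := ssub sid (sscale Xi0^-1 (sprod 0 (A 0%N) (seT i))).

Definition Umat (k : nat) : smat :=
  sprod k.-1
    (fun m => \sum_(j < k) ('C(k, j.+1))%:R * (-1) ^+ j *:
        sprod j (spow 1 (ssub sid F1) j) (spow 1 sid (k.-1 - j)%N) m)
    (seT i).

(* F_k for k >= 2, given the previously computed G j = F_j (j < k):
   F_k = -1/X_i^0 [sum_{j=0}^{k-2} C(k-1,j) F_{j+1} (A_{k-j-1} (.) Id^{(.)j})] U_k *)
Definition Fstep (G : nat -> smat) (k : nat) : smat :=
  sscale (- Xi0^-1)
    (smul (fun m => \sum_(j < k.-1)
              ('C(k.-1, j))%:R *: smul (G j.+1) (sprod (k.-1 - j)%N (A (k.-1 - j)%N) (spow 1 sid j)) m)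
          (Umat k)).

(* strong recursion through a fuel argument: Faux fuel k = F_k whenever k <= fuel *)
Fixpoint Faux (fuel : nat) (k : nat) : smat :=
  match fuel with
  | 0 => szero
  | fuel'.+1 =>
      if k == 0%N then szero
      else if k == 1%N then F1
      else Fstep (Faux fuel') k
  end.

Definition F (k : nat) : smat := Faux k k.

End Filter.
End SymMatrices.

(* Main.v *)
Require Import Defs.
From HB Require Import structures.
From mathcomp Require Import all_boot all_order all_algebra.
From mathcomp Require Import mpoly.
From mathcomp Require Import zify ring.
From Stdlib Require Import FunctionalExtensionality.
Set Implicit Arguments.
Unset Strict Implicit.
Unset Printing Implicit Defensive.
Import Order.TTheory GRing.Theory Num.Theory.
Local Open Scope ring_scope.


Section Aux.
Variables (K : fieldType) (n : nat).
Implicit Types (X Y : smat K n) (P Q : {mpoly K[n]}).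

Definition Lin X P : {mpoly K[n]} := \sum_(r <- msupp P) P@_r *: X r.

Lemma smulE X B m : smul X B m = Lin X (B m).
Proof. by []. Qed.

Lemma LinE_seq X P (s : seq 'X_{1..n}) : uniq s -> {subset msupp P <= s} ->
  Lin X P = \sum_(r <- s) P@_r *: X r.
Proof.
move=> us sub; rewrite /Lin.
rewrite [RHS](bigID (fun r => r \in msupp P)) /=.
rewrite [X in _ = _ + X]big1 ?addr0; last first.
  by move=> r /memN_msupp_eq0 ->; rewrite scale0r.
rewrite -[in RHS]big_filter; apply: perm_big.
apply: uniq_perm; [exact: msupp_uniq | exact: filter_uniq |].
by move=> r; rewrite mem_filter; case: (boolP (r \in msupp P)) => // /sub ->.
Qed.

Lemma LinD X P Q : Lin X (P + Q) = Lin X P + Lin X Q.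
Proof.
set s := undup (msupp P ++ msupp Q).
have us : uniq s by exact: undup_uniq.
rewrite (@LinE_seq X (P + Q) s) //; last first.
  by move=> r /msuppD_le; rewrite mem_undup.
rewrite (@LinE_seq X P s) //; last by move=> r hr; rewrite mem_undup mem_cat hr.
rewrite (@LinE_seq X Q s) //; last by move=> r hr; rewrite mem_undup mem_cat hr orbT.
by rewrite -big_split; apply: eq_bigr => r _; rewrite mcoeffD scalerDl.
Qed.

Lemma LinZ X c P : Lin X (c *: P) = c *: Lin X P.
Proof.
rewrite (@LinE_seq X (c *: P) (msupp P)) ?msupp_uniq //; last exact: msuppZ_le.
by rewrite /Lin scaler_sumr; apply: eq_bigr => r _; rewrite mcoeffZ scalerA.
Qed.

Lemma Lin0 X : Lin X 0 = 0.
Proof. by rewrite /Lin msupp0 big_nil. Qed.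

Lemma Lin_sum X (I : Type) (s : seq I) (G : I -> {mpoly K[n]}) :
  Lin X (\sum_(j <- s) G j) = \sum_(j <- s) Lin X (G j).
Proof.
elim: s => [|a s IH]; first by rewrite !big_nil Lin0.
by rewrite !big_cons LinD IH.
Qed.

Lemma LinX X m : Lin X 'X_[m] = X m.
Proof. by rewrite /Lin msuppX big_seq1 mcoeffX eqxx scale1r. Qed.

Lemma LinC X Y c P : Lin (fun r => c *: Lin X (Y r)) P = c *: Lin X (Lin Y P).
Proof.
transitivity (\sum_(r <- msupp P) P@_r *: (c *: Lin X (Y r))); first by [].
rewrite [Lin Y P]/Lin Lin_sum scaler_sumr; apply: eq_bigr => r _.
by rewrite LinZ scalerA mulrC -scalerA.
Qed.

Lemma Lin_ext X Y P : (forall r, r \in msupp P -> X r = Y r) -> Lin X P = Lin Y P.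
Proof. by move=> h; rewrite /Lin big_seq_cond [RHS]big_seq_cond; apply: eq_bigr => r /andP[/h -> _]. Qed.

End Aux.


Section Comb.
Variables (n : nat).
Implicit Types (k p m : 'X_{1..n}).

Lemma lemU k l : (U_(l)%MM <= k)%MM = (0 < k l)%N.
Proof.
apply/mnm_lepP/idP => [/(_ l)|h j]; first by rewrite mnm1E eqxx.
by rewrite mnm1E; case: eqP => [<-|].
Qed.

Lemma mdeg_sub p k : (p <= k)%MM -> mdeg (k - p) = (mdeg k - mdeg p)%N.
Proof. by move=> h; rewrite -{2}(submK h) mdegD addnK. Qed.

Lemma subKm p k : (p <= k)%MM -> (k - (k - p) = p)%MM.
Proof. by move=> h; rewrite submBA // addmC addmK. Qed.

Lemma sum_bpred1 (V : zmodType) b (G : 'X_{1..n} -> V) m : (mdeg m < b)%N ->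
  \sum_(p : 'X_{1..n < b} | bmnm p == m) G p = G m.
Proof.
move=> hb; by rewrite (big_pred1 (BMultinom hb)).
Qed.

Lemma sum_deg1 (V : zmodType) b (G : 'X_{1..n} -> V) k : (1 < b)%N ->
  \sum_(p : 'X_{1..n < b} | (bmnm p <= k)%MM && (mdeg p == 1%N)) G p
  = \sum_(l < n | (0 < k l)%N) G U_(l)%MM.
Proof.
move=> hb; rewrite big_mkcond [RHS]big_mkcond /=.
transitivity (\sum_(p : 'X_{1..n<b}) \sum_(l < n)
   (if (bmnm p == U_(l)%MM) && (0 < k l)%N then G p else 0)).
  apply: eq_bigr => p _; case: ifP => [/andP[pk /mdeg1P[l /eqP pl]] | hc].
    rewrite (bigD1 l) //= pl eqxx -lemU -pl pk /= big1 ?addr0 // => j hj.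
    by rewrite pl eq_mnm1 eq_sym (negbTE hj).
  rewrite big1 // => l _; case: ifP => // /andP[/eqP pl kl].
  by move: hc; rewrite pl lemU kl mdeg1.
rewrite exchange_big; apply: eq_bigr => l _ /=.
case: ifP => kl; last by rewrite big1 // => p _; rewrite andbF.
rewrite -big_mkcond /=.
under eq_bigl do rewrite andbT.
by apply: sum_bpred1; rewrite mdeg1.
Qed.

Lemma sum_degm1 (V : zmodType) b (G : 'X_{1..n} -> V) k d :
  mdeg k = d.+1 -> (d < b)%N ->
  \sum_(p : 'X_{1..n < b} | (bmnm p <= k)%MM && (mdeg p == d)) G p
  = \sum_(l < n | (0 < k l)%N) G (k - U_(l)%MM)%MM.
Proof.
move=> hk hb; rewrite big_mkcond [RHS]big_mkcond /=.
have degU l : (0 < k l)%N -> mdeg (k - U_(l)%MM)%MM = d.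
  by move=> kl; rewrite mdeg_sub ?lemU // hk mdeg1 subn1.
transitivity (\sum_(p : 'X_{1..n<b}) \sum_(l < n)
   (if (bmnm p == k - U_(l)%MM)%MM && (0 < k l)%N then G p else 0)).
  apply: eq_bigr => p _; case: ifP => [/andP[pk /eqP pd] | hc].
    have : mdeg (k - p)%MM == 1%N by rewrite mdeg_sub // hk pd subSn // subnn.
    case/mdeg1P => l /eqP kp.
    have pl : bmnm p = (k - U_(l)%MM)%MM by rewrite -kp subKm.
    have kl : (0 < k l)%N.
      have := congr1 (fun m : 'X_{1..n} => m l) kp; rewrite /= mnmBE mnm1E eqxx.
      by move=> h; rewrite lt0n; apply/eqP => e; rewrite e in h.
    rewrite (bigD1 l) //= pl eqxx kl /= big1 ?addr0 // => j hj.
    case: ifP => // /andP[/eqP e kj]; exfalso; move: hj.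
    have : U_(j)%MM = U_(l)%MM by rewrite -[U_(j)%MM](subKm (k := k)) ?lemU // -e subKm // lemU.
    by move/eqP; rewrite eq_mnm1 => ->.
  rewrite big1 // => l _; case: ifP => // /andP[/eqP pl kl].
  by move: hc; rewrite pl lem_subr degU // eqxx.
rewrite exchange_big; apply: eq_bigr => l _ /=.
case: ifP => kl; last by rewrite big1 // => p _; rewrite andbF.
rewrite -big_mkcond /=.
under eq_bigl do rewrite andbT.
by apply: sum_bpred1; rewrite degU.
Qed.

Lemma mbinU k l : mbin k U_(l)%MM = k l.
Proof.
rewrite /mbin (bigD1 l) //= mnm1E eqxx bin1 big1 ?muln1 // => j hj.
by rewrite mnm1E eq_sym (negbTE hj) bin0.
Qed.

Lemma mbinsubU k l : (0 < k l)%N -> mbin k (k - U_(l)%MM)%MM = k l.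
Proof.
move=> kl; rewrite /mbin (bigD1 l) //= mnmBE mnm1E eqxx bin_sub // bin1.
rewrite big1 ?muln1 // => j hj; rewrite mnmBE mnm1E eq_sym (negbTE hj) subn0 binn //.
Qed.

Lemma mbin0 k : mbin k 0%MM = 1%N.
Proof. by rewrite /mbin big1 // => l _; rewrite mnm0E bin0. Qed.

End Comb.


Section Sprod.
Variables (K : numFieldType) (n : nat).
Implicit Types (B C L M : smat K n) (k m r : 'X_{1..n}).

Lemma sprod0 B C k : sprod 0 B C k = B 0%MM * C k.
Proof.
rewrite /sprod bin0 invr1 scale1r.
rewrite (eq_bigl (fun p : 'X_{1..n < _} => bmnm p == 0%MM)); last first.
  move=> p /=; rewrite mdeg_eq0; case: eqP => [->|]; last by rewrite andbF.
  by rewrite andbT; apply/mnm_lepP => l; rewrite mnm0E.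
by rewrite (sum_bpred1 (fun q => (mbin k q)%:R *: (B q * C (k - q)%MM))) ?mdeg0 // mbin0 subm0 scale1r.
Qed.

Lemma sprod1l L M k : (0 < mdeg k)%N ->
  sprod 1 L M k = (mdeg k)%:R^-1 *:
     \sum_(l < n | (0 < k l)%N) (k l)%:R *: (L U_(l)%MM * M (k - U_(l)%MM)%MM).
Proof.
move=> hk; rewrite /sprod bin1 (sum_deg1 (fun q => (mbin k q)%:R *: (L q * M (k - q)%MM))) ?ltnS //.
by congr (_ *: _); apply: eq_bigr => l _; rewrite mbinU.
Qed.

Lemma sprodr1 M L d r : mdeg r = d.+1 ->
  sprod d M L r = (d.+1)%:R^-1 *:
     \sum_(l < n | (0 < r l)%N) (r l)%:R *: (M (r - U_(l)%MM)%MM * L U_(l)%MM).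
Proof.
move=> hr; rewrite /sprod hr binSn (@sum_degm1 n _ _ (fun q => (mbin r q)%:R *: (M q * L (r - q)%MM)) r d hr) ?ltnS //.
congr (_ *: _); apply: eq_bigr => l hl; rewrite mbinsubU // subKm //.
by rewrite lemU.
Qed.

Lemma spow1E L j m : mdeg m = j ->
  spow 1 L j m = mmap1 (fun l => L U_(l)%MM) m.
Proof.
elim: j m => [|j IH] m hm.
  by move/eqP: hm; rewrite mdeg_eq0 => /eqP ->; rewrite mmap11 /= /sunit eqxx.
rewrite /= sprod1l ?hm //.
have -> : \sum_(l < n | (0 < m l)%N) (m l)%:R *:
     (L U_(l)%MM * spow 1 L j (m - U_(l)%MM)%MM)
   = \sum_(l < n | (0 < m l)%N) (m l)%:R *: mmap1 (fun l => L U_(l)%MM) m.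
  apply: eq_bigr => l hl; rewrite IH; last by rewrite mdeg_sub ?lemU // hm mdeg1 subn1.
  have e : m = (U_(l)%MM + (m - U_(l)%MM))%MM by rewrite addmC submK // lemU.
  have -> : mmap1 (fun l => L U_(l)%MM) m
     = L U_(l)%MM * mmap1 (fun l => L U_(l)%MM) (m - U_(l)%MM)%MM.
    by rewrite {1}e commr_mmap1_M ?mmap1U // => ? ?; exact: mulrC.
  by [].
rewrite -scaler_suml -natr_sum scalerA.
have -> : (\sum_(l < n | (0 < m l)%N) m l)%N = mdeg m.
  rewrite mdegE big_mkcond /=; apply: eq_bigr => l _; by case: ifP => //; rewrite lt0n => /negbFE/eqP ->.
by rewrite hm mulVf ?scale1r // pnatr_eq0.
Qed.

End Sprod.


Section Filt.
Variables (K : numFieldType) (n : nat) (A : nat -> smat K n) (i : 'I_n).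
Hypothesis ha : A 0%N 0%MM \is 1.-homog.
Hypothesis hXi : Xi0 A i != 0.

Local Notation a := (A 0%N 0%MM).
Local Notation Xi := (Xi0 A i).
Local Notation b := (Xi^-1 *: a).

Lemma F1E r : F1 A i r = 'X_[r] - Xi^-1 *: (a * (r == U_(i)%MM)%:R).
Proof. by rewrite /F1 /ssub /sscale /sid sprod0 /seT. Qed.

Lemma PE l : ssub (@sid K n) (F1 A i) U_(l)%MM = if l == i then b else 0.
Proof.
rewrite /ssub F1E /sid opprB addrC subrK eq_mnm1.
by case: eqP => _; rewrite ?mulr1 ?mulr0 ?scaler0.
Qed.

Lemma LinF1 P : Lin (F1 A i) P = P - Xi^-1 *: (P@_(U_(i)%MM) *: a).
Proof.
rewrite /Lin.
under eq_bigr => r _ do rewrite F1E scalerBr.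
rewrite sumrB -mpolyE; congr (_ - _).
have hc : P@_(U_(i)%MM) = \sum_(r <- msupp P) P@_r * (r == U_(i)%MM)%:R.
  rewrite {1}(mpolyE P) (raddf_sum (mcoeff U_(i)%MM)).
  by apply: eq_bigr => r _; rewrite /= mcoeffZ mcoeffX.
rewrite hc scaler_suml scaler_sumr; apply: eq_bigr => r _.
by rewrite mulr_natr -scalerA scaler_nat !scalerA mulrC.
Qed.


Lemma lemUn p j : ((U_(i) *+ j)%MM <= p)%MM = (j <= p i)%N.
Proof.
apply/mnm_lepP/idP => [/(_ i)|h l]; first by rewrite mulmnE mnm1E eqxx mul1n.
by rewrite mulmnE mnm1E; case: eqP => [<-|]; rewrite ?mul1n ?mul0n.
Qed.

Lemma mbinUn p j : mbin p (U_(i) *+ j)%MM = 'C(p i, j).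
Proof.
rewrite /mbin (bigD1 i) //= mulmnE mnm1E eqxx mul1n big1 ?muln1 // => l hl.
by rewrite mulmnE mnm1E eq_sym (negbTE hl) mul0n bin0.
Qed.

Definition hP (l : 'I_n) : {mpoly K[n]} := if l == i then b else 0.

Lemma mmapP_Un j : mmap1 hP (U_(i) *+ j)%MM = b ^+ j.
Proof.
rewrite /mmap1 (bigD1 i) //= /hP eqxx mulmnE mnm1E eqxx mul1n big1 ?mulr1 // => l hl.
by rewrite (negbTE hl) mulmnE mnm1E eq_sym (negbTE hl) mul0n expr0.
Qed.

Lemma mmapP_0 q j : mdeg q = j -> q <> (U_(i) *+ j)%MM -> mmap1 hP q = 0.
Proof.
move=> hq hne.
case: (boolP [exists l, (l != i) && (0 < q l)%N]) => [/existsP[l /andP[hl ql]] | /existsPn hn].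
  rewrite /mmap1 (bigD1 l) //= /hP (negbTE hl) expr0n.
  by move: ql; rewrite lt0n => /negbTE ->; rewrite mul0r.
exfalso; apply: hne; apply/mnmP => l; rewrite mulmnE mnm1E.
have hz l' : l' != i -> q l' = 0%N.
  by move=> hl'; move: (hn l'); rewrite hl' /= lt0n negbK => /eqP.
case: (eqVneq i l) => [<-|hl]; last by rewrite mul0n hz // eq_sym.
rewrite mul1n -hq mdegE (bigD1 i) //= big1 ?addn0 // => l' hl'.
Qed.

Lemma mixed j e p : mdeg p = (j + e)%N ->
  sprod j (spow 1 (ssub (@sid K n) (F1 A i)) j) (spow 1 (@sid K n) e) p
  = ('C(j + e, j)%:R^-1 * 'C(p i, j)%:R) *: (b ^+ j * 'X_[p - U_(i) *+ j]).
Proof.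
move=> hp; rewrite /sprod hp -scalerA; congr (_ *: _).
set T := 'C(p i, j)%:R *: (b ^+ j * 'X_[p - U_(i) *+ j]).
have hU : mdeg (U_(i) *+ j)%MM = j by rewrite mdegMn mdeg1 mul1n.
transitivity (\sum_(q : 'X_{1..n < (j+e).+1} | bmnm q == (U_(i) *+ j)%MM) T).
  rewrite [LHS]big_mkcond [RHS]big_mkcond /=; apply: eq_bigr => q _.
  case: ifP => [/andP[qp /eqP qj] | hc].
    rewrite (spow1E _ qj) (@spow1E _ _ _ e); last by rewrite mdeg_sub // hp qj addKn.
    have sidE m : mmap1 (fun l => @sid K n U_(l)%MM) m = 'X_[m] by rewrite /sid mmap1_id.
    rewrite sidE (@mmap1_eq _ _ (fun l => ssub (@sid K n) (F1 A i) U_(l)%MM) hP q PE).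
    case: eqP => [qe | qne].
      by rewrite qe mbinUn mmapP_Un.
    by rewrite (mmapP_0 qj qne) mul0r scaler0.
  case: eqP => // qe; move: hc; rewrite qe hU eqxx andbT lemUn => /negbT.
  by rewrite -ltnNge /T => /bin_small ->; rewrite scale0r.
apply: (@sum_bpred1 n _ (j+e).+1 (fun _ => T) (U_(i) *+ j)%MM).
by rewrite hU ltnS leq_addr.
Qed.

End Filt.


Lemma binom_core (R : comRingType) (x y : R) N k : (N <= k)%N ->
  x ^+ N - (x - y) ^+ N
  = \sum_(j < k) ('C(N, j.+1)%:R * (-1) ^+ j) * (y ^+ j.+1 * x ^+ (N - j.+1)).
Proof.
move=> hN.
set G := fun j : nat => ('C(N, j.+1)%:R * (-1) ^+ j) * (y ^+ j.+1 * x ^+ (N - j.+1)).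
have -> : \sum_(j < k) G j = \sum_(j < N) G j.
  rewrite (big_ord_widen _ G hN) [RHS]big_mkcond; apply: eq_bigr => j _.
  case: ifP => // /negbT; rewrite -leqNgt -ltnS => /bin_small.
  by rewrite /G => ->; rewrite !mul0r.
rewrite /G.
rewrite exprDn big_ord_recl /= subn0 expr0 mulr1 bin0 mulr1n opprD addrA subrr add0r.
rewrite -sumrN; apply: eq_bigr => j _.
rewrite /bump /= add1n -mulr_natl [(- y) ^+ _]exprNn exprS.
ring.
Qed.

Section Filt2.
Variables (K : numFieldType) (n : nat) (A : nat -> smat K n) (i : 'I_n).
Hypothesis hXi : Xi0 A i != 0.

Local Notation a := (A 0%N 0%MM).
Local Notation Xi := (Xi0 A i).
Local Notation b := (Xi^-1 *: a).
Local Notation hF := (fun l : 'I_n => F1 A i U_(l)%MM).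

Lemma XE (m : 'X_{1..n}) : 'X_[m] = ('X_i : {mpoly K[n]}) ^+ (m i) * \prod_(l < n | l != i) 'X_l ^+ (m l).
Proof. by rewrite mpolyXE_id (bigD1 i). Qed.

Lemma mmapF1 (r : 'X_{1..n}) : mmap1 hF r = ('X_i - b) ^+ (r i) * \prod_(l < n | l != i) 'X_l ^+ (r l).
Proof.
rewrite /mmap1 (bigD1 i) //= F1E eqxx mulr1; congr (_ ^+ _ * _).
by apply: eq_bigr => l hl; rewrite F1E eq_mnm1 (negbTE hl) mulr0 scaler0 subr0.
Qed.

Lemma scale_sign (j : nat) (v : {mpoly K[n]}) : ((-1) ^+ j : K) *: v = (-1) ^+ j * v.
Proof.
elim: j => [|j IH]; first by rewrite !expr0 scale1r mul1r.
by rewrite !exprS -scalerA IH scaleN1r !mulN1r mulNr.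
Qed.

Lemma expandF1 (r : 'X_{1..n}) k : (r i <= k)%N ->
  'X_[r] - mmap1 hF r = \sum_(j < k) ('C(r i, j.+1)%:R * (-1) ^+ j) *:
       (b ^+ j.+1 * 'X_[r - U_(i) *+ j.+1]).
Proof.
move=> hk; rewrite XE mmapF1 -mulrBl (binom_core _ _ hk) mulr_suml.
apply: eq_bigr => j _.
rewrite [in RHS]XE mnmBE mulmnE mnm1E eqxx mul1n.
have -> : \prod_(l < n | l != i) ('X_l : {mpoly K[n]}) ^+ (r - U_(i) *+ j.+1)%MM l
        = \prod_(l < n | l != i) 'X_l ^+ r l.
  by apply: eq_bigr => l hl; rewrite mnmBE mulmnE mnm1E eq_sym (negbTE hl) mul0n subn0.
rewrite -scalerA scale_sign scaler_nat -mulr_natl; ring.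
Qed.


Lemma scal_id (k' j ri : nat) : (j <= k')%N -> (0 < ri)%N ->
  (k'.+1)%:R^-1 * ri%:R * ('C(k'.+1, j.+1)%:R * (-1) ^+ j) *
     ('C(k', j)%:R^-1 * 'C(ri - 1, j)%:R)
  = 'C(ri, j.+1)%:R * (-1) ^+ j :> K.
Proof.
move=> hj hr.
have nz1 : (k'.+1)%:R != 0 :> K by rewrite pnatr_eq0.
have nz2 : ('C(k', j))%:R != 0 :> K by rewrite pnatr_eq0 -lt0n bin_gt0.
have nz3 : (j.+1)%:R != 0 :> K by rewrite pnatr_eq0.
have e1 : ('C(k'.+1, j.+1)%:R : K) = (k'.+1)%:R * 'C(k', j)%:R / (j.+1)%:R.
  by rewrite -natrM (mul_bin_diag k'.+1 j) natrM mulrAC mulfV // mul1r.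
have e2 : ('C(ri, j.+1)%:R : K) = ri%:R * 'C(ri - 1, j)%:R / (j.+1)%:R.
  by rewrite -natrM subn1 (mul_bin_diag ri j) natrM mulrAC mulfV // mul1r.
rewrite e1 e2; field.
by apply/and3P; split => //; rewrite addrC natr1 pnatr_eq0.
Qed.

Lemma Umat_mul k r : mdeg r = k -> (0 < k)%N ->
  a * Umat A i k r = Xi *: ('X_[r] - mmap1 hF r).
Proof.
case: k => // k' hr _.
rewrite /Umat /= (sprodr1 _ _ hr).
case: (posnP (r i)) => [ri0 | ripos].
  rewrite big1 ?scaler0 ?mulr0; last first.
    move=> l hl; rewrite /seT eq_mnm1; case: eqP => [e|_]; last by rewrite mulr0 scaler0.
    by rewrite e ri0 in hl.
  by rewrite XE mmapF1 ri0 !expr0 subrr scaler0.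
rewrite (bigD1 i) //= [X in _ + X]big1 ?addr0; last first.
  by move=> l /andP[_ hl]; rewrite /seT eq_mnm1 (negbTE hl) mulr0 scaler0.
rewrite /seT eqxx mulr1.
have hrk : (r i <= k'.+1)%N by rewrite -hr mdegE (bigD1 i) //= leq_addr.
rewrite (expandF1 hrk) !scaler_sumr mulr_sumr; apply: eq_bigr => j _.
have hj : (j <= k')%N by rewrite -ltnS.
have hp : mdeg (r - U_(i))%MM = (j + (k' - j))%N.
  by rewrite mdeg_sub ?lemU // hr mdeg1 subn1 /= subnKC.
rewrite (mixed A i hp) subnKC // mnmBE mnm1E eqxx submDA -mulmS.
have ha' : a = Xi *: b by rewrite scalerA mulfV // scale1r.
rewrite !scalerA -scalerAr {1}ha' -scalerAl [b * (_ * _)]mulrA -exprS scalerA [Xi * _]mulrC /=.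
by rewrite scal_id.
Qed.

End Filt2.


Section Filt3.
Variables (K : numFieldType) (n : nat) (A : nat -> smat K n) (i : 'I_n).
Hypothesis ha : A 0%N 0%MM \is 1.-homog.
Hypothesis hXi : Xi0 A i != 0.

Local Notation a := (A 0%N 0%MM).
Local Notation Xi := (Xi0 A i).
Local Notation hF := (fun l : 'I_n => F1 A i U_(l)%MM).

Definition sig (P : {mpoly K[n]}) : {mpoly K[n]} := mmap (@mpolyC n K) hF P.

Lemma sigM P Q : sig (P * Q) = sig P * sig Q.
Proof. exact: (mmap_is_multiplicative _ _).1. Qed.

Lemma sig_a : sig a = 0.
Proof.
transitivity (Lin (F1 A i) a).
  rewrite /sig /mmap /Lin big_seq [RHS]big_seq; apply: eq_bigr => r hr.
  have := dhomog_mf ha hr; move/eqP/mdeg1P => [l /eqP ->].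
  by rewrite mmap1U mul_mpolyC.
by rewrite LinF1 scalerA mulVf // scale1r subrr.
Qed.

Lemma keyLin k m : (0 < k)%N -> mdeg m = k.-1 ->
  Lin (Umat A i k) (a * 'X_[m]) = Xi *: 'X_[m].
Proof.
move=> hk hm.
have anz : a != 0 by apply: contraNneq hXi => e; rewrite /Xi0 e mcoeff0.
apply: (mulfI anz).
set P := a * 'X_[m].
have hP : P \is k.-homog.
  have hX : ('X_[m] : {mpoly K[n]}) \is (k.-1).-homog by rewrite dhomogX; apply/eqP; exact: hm.
  by have := dhomogM ha hX; rewrite add1n prednK.
transitivity (Xi *: (P - sig P)).
  rewrite /Lin mulr_sumr.
  have -> : \sum_(r <- msupp P) a * (P@_r *: Umat A i k r)
     = \sum_(r <- msupp P) Xi *: (P@_r *: 'X_[r] - P@_r *: mmap1 hF r).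
    rewrite big_seq [RHS]big_seq; apply: eq_bigr => r hr.
    rewrite -scalerAr (Umat_mul hXi (dhomog_mf hP hr)) //.
    by rewrite scalerA mulrC -scalerA scalerBr.
  rewrite -scaler_sumr sumrB -mpolyE /sig /mmap.
  by congr (_ *: (_ - _)); apply: eq_bigr => r _; rewrite mul_mpolyC.
by rewrite /P sigM sig_a mul0r subr0 scalerAr.
Qed.

End Filt3.


Section Fin.
Variables (K : numFieldType) (n : nat) (A : nat -> smat K n) (i : 'I_n).

Lemma Fstep_ext (G G' : nat -> smat K n) k :
  (forall j, (j < k.-1)%N -> G j.+1 = G' j.+1) -> Fstep A i G k = Fstep A i G' k.
Proof.
move=> h; rewrite /Fstep; congr (sscale _ (smul _ _)).
apply: functional_extensionality => m; apply: eq_bigr => j _.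
by rewrite (h j (ltn_ord j)).
Qed.

Lemma Faux_eq f f' k : (k <= f)%N -> (k <= f')%N -> Faux A i f k = Faux A i f' k.
Proof.
elim: f f' k => [|f IH] f' k hf hf'.
  by move: hf; rewrite leqn0 => /eqP ->; case: f' hf'.
case: f' hf' => [|f'] hf'.
  by move: hf'; rewrite leqn0 => /eqP ->.
rewrite /=; case: eqP => // hk0; case: eqP => // hk1.
apply: Fstep_ext => j hj; apply: IH; move: hf hf' hj hk0 hk1; case: k => //= k; lia.
Qed.

Definition Rf (G : nat -> smat K n) (k : nat) : smat K n := fun m =>
  \sum_(j < k.-1) ('C(k.-1, j))%:R *:
     smul (G j.+1) (sprod (k.-1 - j)%N (A (k.-1 - j)%N) (spow 1 (@sid K n) j)) m.

Lemma FstepLin G k P :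
  Lin (Fstep A i G k) P = - (Xi0 A i)^-1 *: Lin (Rf G k) (Lin (Umat A i k) P).
Proof. exact: LinC. Qed.

End Fin.

Theorem mainTheorem2 (K : numClosedFieldType) (n : nat)
    (A : nat -> smat K n) (i : 'I_n)
    (hA : forall (j : nat) (m : 'X_{1..n}), mdeg m = j -> A j m \is 1.-homog)
    (hXi : Xi0 A i != 0) :
  forall k : nat, (1 <= k)%N ->
  forall m : 'X_{1..n}, mdeg m = k.-1 ->
    \sum_(j < k) ('C(k.-1, j))%:R *:
       smul (F A i j.+1) (sprod (k.-1 - j)%N (A (k.-1 - j)%N) (spow 1 (@sid K n) j)) m = 0.
Proof.
have ha : A 0%N 0%MM \is 1.-homog by apply: hA; rewrite mdeg0.
move=> [//|k'] _ m hm.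
case: k' hm => [|k'] hm.
  move/eqP: hm; rewrite mdeg_eq0 => /eqP ->.
  rewrite big_ord1 /= bin0 scale1r smulE sprod0 /= /sunit eqxx mulr1.
  by rewrite /F /= LinF1 scalerA mulVf // scale1r subrr.
rewrite /= in hm.
rewrite big_ord_recr /= subnn binn scale1r smulE sprod0.
have hs : spow 1 (@sid K n) k'.+1 m = 'X_[m] by rewrite (spow1E _ hm) /sid mmap1_id.
rewrite -[sprod 1 _ _ m]/(spow 1 (@sid K n) k'.+1 m) hs.
have hF : F A i k'.+2 = Fstep A i (Faux A i k'.+1) k'.+2 by [].
rewrite hF FstepLin (keyLin ha hXi) // LinZ LinX scalerA mulNr mulVf // scaleN1r.
apply/eqP; rewrite subr_eq0; apply/eqP; rewrite /Rf /=.
apply: eq_bigr => j _.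
by rewrite /F (@Faux_eq _ _ A i j.+1 k'.+1 j.+1).
Qed.
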